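(* Let $d\ge1$, let $\Lambda\subset\mathbb{R}^{2d}$ be a lattice, let $r>0$, and let $\Omega\subset\mathbb{R}^{2d}$ be a compact set with maximally Ahlfors regular boundary with constant $\kappa_{\partial\Omega}$. Then there exist constants $C,D$ (depending on $r$ and $\Lambda$) such that $$\#\partial^r_\Lambda\Omega\le C\,\frac{|\partial\Omega|}{\kappa_{\partial\Omega}}\Big(1+\frac{D}{|\partial\Omega|}\Big).$$
   Context: A lattice is $\Lambda=M\mathbb{Z}^{2d}$ with $M$ an invertible real $2d\times2d$ matrix. Write $n=2d$ for the ambient dimension, $\mathcal{H}^{n-1}$ for $(n-1)$-dimensional Hausdorff measure and $|\partial\Omega|=\mathcal{H}^{n-1}(\partial\Omega)$. The set $\Omega$ has maximally Ahlfors regular boundary with constant $\kappa_{\partial\Omega}>0$ if $\mathcal{H}^{n-1}(\partial\Omega\cap B(z,\varrho))\ge\kappa_{\partial\Omega}\varrho^{\,n-1}$ for every $z\in\partial\Omega$ and every $0<\varrho<|\partial\Omega|^{1/(n-1)}$. $B(z,\varrho)$ is the open ball; for $r>0$, $\partial^r_\Lambda\Omega=\Lambda\cap(\partial\Omega+B(0,r))$, and $\#$ denotes cardinality. *)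

(* Defs.v *)
From HB Require Import structures.
From mathcomp Require Import all_boot all_order all_algebra.
From mathcomp Require Import all_classical all_reals all_analysis.
Set Implicit Arguments. Unset Strict Implicit. Unset Printing Implicit Defensive.
Import Order.TTheory GRing.Theory Num.Theory.
Import numFieldNormedType.Exports.
Local Open Scope classical_set_scope.
Local Open Scope ring_scope.

(* Euclidean norm on R^n (the library's norm on matrices is the max norm). *)
Definition enorm (R : realType) (n : nat) (x : 'cV[R]_n) : R :=
  Num.sqrt (\sum_(i < n) x i ord0 ^+ 2).

Definition eball (R : realType) (n : nat) (z : 'cV[R]_n) (rho : R) :
  set 'cV[R]_n := [set x | enorm (x - z) < rho].

(* Topological boundary (topology of R^n; equal for all norms). *)
Definition bdry (R : realType) (n : nat) (A : set 'cV[R]_n) : set 'cV[R]_n :=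
  closure A `\` interior A.

(* Euclidean diameter, with diam(empty) = 0. *)
Definition ediam (R : realType) (n : nat) (E : set 'cV[R]_n) : \bar R :=
  ereal_sup ([set 0%E] `|` [set (enorm (x - y))%:E | x in E & y in E]).

Fixpoint unit_ball_vol (R : realType) (k : nat) : R :=
  match k with
  | 0 => 1
  | 1 => 2
  | k'.+2 => (2 * pi / k'.+2%:R) * unit_ball_vol R k'
  end.

Definition hausdorff_delta (R : realType) (n s : nat) (delta : R)
    (A : set 'cV[R]_n) : \bar R :=
  ereal_inf [set (\sum_(0 <= i <oo)
                   ((unit_ball_vol R s * (fine (ediam (E i)) / 2) ^+ s)%:E))%E
            | E in [set E : nat -> set 'cV[R]_n |
                    A `<=` \bigcup_i E i /\ forall i, (ediam (E i) <= delta%:E)%E]].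

(* s-dimensional Hausdorff measure H^s(A) = lim_{delta -> 0+} H^s_delta(A)
   = sup_{delta > 0} H^s_delta(A). *)
Definition hausdorff (R : realType) (n s : nat) (A : set 'cV[R]_n) : \bar R :=
  ereal_sup [set hausdorff_delta s delta A | delta in [set d : R | 0 < d]].

Definition bdry_measure (R : realType) (n : nat) (Om : set 'cV[R]_n) : \bar R :=
  hausdorff n.-1 (bdry Om).

Definition max_ahlfors_regular (R : realType) (n : nat) (Om : set 'cV[R]_n)
    (kappa : R) : Prop :=
  forall z, bdry Om z -> forall rho : R, 0 < rho ->
    (rho%:E < poweR (bdry_measure Om) (n.-1%:R)^-1)%E ->
    ((kappa * rho ^+ n.-1)%:E <= hausdorff n.-1 (bdry Om `&` eball z rho))%E.

Definition lattice (R : realType) (n : nat) (M : 'M[R]_n) : set 'cV[R]_n :=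
  [set x | exists k : 'cV[int]_n, x = M *m map_mx (fun z : int => z%:~R) k].

Definition bdry_lattice_pts (R : realType) (n : nat) (M : 'M[R]_n) (r : R)
    (Om : set 'cV[R]_n) : set 'cV[R]_n :=
  lattice M `&` [set x | exists2 y, bdry Om y & eball 0 r (x - y)].

(* Main.v *)
Require Import Defs.
From HB Require Import structures.
From mathcomp Require Import all_boot all_order all_algebra.
From mathcomp Require Import all_classical all_reals all_analysis finmap.
From mathcomp Require Import ring lra zify.
Import Order.TTheory GRing.Theory Num.Theory.
Import numFieldNormedType.Exports.
Local Open Scope classical_set_scope.
Local Open Scope ring_scope.
Set Implicit Arguments. Unset Strict Implicit.

Section Enorm.
Variables (R : realType) (n : nat).
Implicit Types x y : 'cV[R]_n.

Lemma enorm_ge0 x : 0 <= enorm x.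
Proof. exact: sqrtr_ge0. Qed.

Lemma enorm_sq x : enorm x ^+ 2 = \sum_(i < n) x i ord0 ^+ 2.
Proof. by rewrite /enorm sqr_sqrtr // sumr_ge0 // => i _; exact: sqr_ge0. Qed.

Lemma enormN x : enorm (- x) = enorm x.
Proof. by rewrite /enorm; congr Num.sqrt; apply: eq_bigr => i _; rewrite mxE sqrrN. Qed.

Lemma enormB x y : enorm (x - y) = enorm (y - x).
Proof. by rewrite -enormN opprB. Qed.

Lemma coord_le_enorm x i : `|x i ord0| <= enorm x.
Proof.
rewrite -(@ler_pXn2r _ 2) ?nnegrE ?enorm_ge0 // enorm_sq real_normK ?num_real //.
rewrite (bigD1 i) //= lerDl sumr_ge0 // => j _; exact: sqr_ge0.
Qed.

Lemma cauchy_schwarz x y :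
  \sum_(i < n) x i ord0 * y i ord0 <= enorm x * enorm y.
Proof.
set A := enorm x; set B := enorm y.
have A0 : 0 <= A by exact: enorm_ge0.
have B0 : 0 <= B by exact: enorm_ge0.
have key : 2 * (A * B) * \sum_(i < n) x i ord0 * y i ord0 <= 2 * (A * B) * (A * B).
  have -> : 2 * (A * B) * (A * B) = B ^+ 2 * A ^+ 2 + A ^+ 2 * B ^+ 2 by ring.
  have E1 : A ^+ 2 = \sum_(i < n) x i ord0 ^+ 2 by exact: enorm_sq.
  have E2 : B ^+ 2 = \sum_(i < n) y i ord0 ^+ 2 by exact: enorm_sq.
  rewrite [in X in B ^+ 2 * X]E1 [in X in _ + _ * X]E2 !mulr_sumr -big_split /=.
  apply: ler_sum => i _.
  have := sqr_ge0 (x i ord0 * B - y i ord0 * A); nra.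
have [AB0|ABpos] := eqVneq (A * B) 0.
  have xy0 : \sum_(i < n) x i ord0 * y i ord0 = 0.
    move: AB0 => /eqP; rewrite mulf_eq0 => /orP[] /eqP.
      rewrite /A /enorm => /eqP; rewrite sqrtr_eq0 => H.
      have Hs : \sum_(i < n) x i ord0 ^+ 2 = 0.
        apply/eqP; rewrite eq_le H sumr_ge0 // => i _; exact: sqr_ge0.
      move/eqP: Hs; rewrite psumr_eq0; last by move=> i _; exact: sqr_ge0.
      move=> /allP H2.
      apply: big1 => i _; have := H2 i (mem_index_enum _); rewrite sqrf_eq0 => /eqP ->.
      by rewrite mul0r.
    rewrite /B /enorm => /eqP; rewrite sqrtr_eq0 => H.
    have Hs : \sum_(i < n) y i ord0 ^+ 2 = 0.
      apply/eqP; rewrite eq_le H sumr_ge0 // => i _; exact: sqr_ge0.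
    move/eqP: Hs; rewrite psumr_eq0; last by move=> i _; exact: sqr_ge0.
      move=> /allP H2.
    apply: big1 => i _; have := H2 i (mem_index_enum _); rewrite sqrf_eq0 => /eqP ->.
    by rewrite mulr0.
  by rewrite xy0 mulr_ge0.
have ABp : 0 < A * B by rewrite lt_def ABpos mulr_ge0.
by rewrite -(@ler_pM2l _ (2 * (A * B))) // mulr_gt0.
Qed.

Lemma enormD x y : enorm (x + y) <= enorm x + enorm y.
Proof.
rewrite -(@ler_pXn2r _ 2) ?nnegrE ?addr_ge0 ?enorm_ge0 //.
rewrite enorm_sq.
have -> : \sum_(i < n) (x + y) i ord0 ^+ 2 =
  \sum_(i < n) x i ord0 ^+ 2 + \sum_(i < n) y i ord0 ^+ 2 +
  2 * \sum_(i < n) x i ord0 * y i ord0.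
  rewrite mulr_sumr -!big_split /=; apply: eq_bigr => i _; rewrite mxE; ring.
rewrite -!enorm_sq; have := cauchy_schwarz x y; nra.
Qed.

Lemma enorm_tri x y z : enorm (x - z) <= enorm (x - y) + enorm (y - z).
Proof. by rewrite -[x - z](subrKA y); exact: enormD. Qed.

End Enorm.

Definition kof (R : realType) n (M : 'M[R]_n) (x : 'cV[R]_n) : 'cV[int]_n :=
  match pselect (lattice M x) with left h => projT1 (cid h) | right _ => 0 end.

Lemma kofP (R : realType) n (M : 'M[R]_n) x :
  lattice M x -> x = M *m map_mx (fun z : int => z%:~R) (kof M x).
Proof.
rewrite /kof => h; case: pselect => // h'.
by case: (cid h') => k /= ->.
Qed.

Lemma lattice_ball_count (R : realType) n (M : 'M[R]_n) (hM : M \in unitmx)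
  (Rad : R) : exists K : nat, forall z (s : seq 'cV[R]_n), uniq s ->
  (forall x, x \in s -> lattice M x /\ enorm (x - z) < Rad) -> (size s <= K)%N.
Proof.
set Mi := invmx M.
set c := \sum_(i < n) \sum_(l < n) `|Mi i l|.
have c0 : 0 <= c by apply: sumr_ge0 => i _; apply: sumr_ge0 => l _.
set N := Num.Def.archi_bound (c * (2 * `|Rad|)).
have HN : c * (2 * `|Rad|) <= N%:R.
  by apply/ltW/archi_boundP; rewrite mulr_ge0 // mulr_ge0.
exists (#|{ffun 'I_n -> 'I_(N + N).+1}|) => z [|x0 s'] // us Hs.
set s := x0 :: s' in us Hs *.
have [Lx0 _] := Hs x0 (mem_head _ _).
have bnd : forall x, x \in s -> forall i,
    (0 <= kof M x i ord0 - kof M x0 i ord0 + N%:Z <= (N + N)%:Z)%R.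
  move=> x xs i; have [Lx dx] := Hs x xs.
  have [_ dx0] := Hs x0 (mem_head _ _).
  have E : map_mx (fun z : int => z%:~R) (kof M x) - map_mx (fun z : int => z%:~R) (kof M x0)
           = Mi *m (x - x0) :> 'cV[R]_n.
    move: (kofP Lx) (kofP Lx0); set kx := kof M x; set k0 := kof M x0 => ex e0.
    by rewrite /Mi mulmxBr [in RHS]ex [in RHS]e0 !mulKmx.
  have Ei := congr1 (fun m : 'cV[R]_n => m i ord0) E; rewrite /= !mxE in Ei.
  have le1 : `|(kof M x i ord0 - kof M x0 i ord0)%:~R| <= (N%:R : R).
    rewrite intrB Ei; apply: (le_trans (ler_norm_sum _ _ _)).
    apply: (@le_trans _ _ (\sum_(l < n) `|Mi i l| * (2 * `|Rad|))).
      apply: ler_sum => l _; rewrite normrM; apply: ler_wpM2l => //.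
      have hc := coord_le_enorm (x - x0) l;
      apply: (le_trans hc).
      apply: (le_trans (enorm_tri _ z _)); rewrite [enorm (z - x0)]enormB.
      have := ler_norm Rad; lra.
    rewrite -mulr_suml; apply: le_trans HN; apply: ler_wpM2r.
      by rewrite mulr_ge0.
    rewrite /c [X in _ <= X](bigD1 i) //= lerDl; apply: sumr_ge0 => j _; exact: sumr_ge0.
  have : `|kof M x i ord0 - kof M x0 i ord0| <= N%:Z.
    by rewrite -(ler_int R) intr_norm.
  rewrite ler_norml => /andP[h1 h2]; apply/andP; split; lia.
pose f x : {ffun 'I_n -> 'I_(N + N).+1} :=
  [ffun i => inord (absz (kof M x i ord0 - kof M x0 i ord0 + N%:Z))].
have finj : {in s &, injective f}.
  move=> x y xs ys /ffunP fxy.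
  rewrite (kofP (proj1 (Hs x xs))) (kofP (proj1 (Hs y ys))); congr (_ *m _).
  apply/matrixP => i j; have -> : j = ord0 by case: j => [[|k] hk] //; apply/val_inj.
  rewrite !mxE; congr intr.
  have := fxy i; rewrite !ffunE => /(congr1 (@nat_of_ord _)).
  have /andP[a1 a2] := bnd x xs i; have /andP[b1 b2] := bnd y ys i.
  rewrite !inordK; first (move=> h; lia).
    lia.
  lia.
rewrite -(size_map f) cardE; apply: uniq_leq_size.
  by rewrite map_inj_in_uniq.
by move=> y _; rewrite mem_enum.
Qed.

Local Open Scope nat_scope.
Lemma greedy (T : eqType) (Q : pred T) (near : T -> T -> bool) (K : nat)
  (nrefl : forall t, near t t) (nsym : forall a b, near a b = near b a) :
  (forall t (s : seq T), uniq s -> all Q s -> all (near t) s -> size s <= K) ->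
  forall s, uniq s -> all Q s -> exists u : seq T, [/\ uniq u, {subset u <= s},
    (forall a b, a \in u -> b \in u -> a != b -> ~~ near a b) &
    size s <= K * size u].
Proof.
move=> HK s; move: {2}(size s) (leqnn (size s)) => m; elim: m s => [|m IH] s.
  by rewrite leqn0 => /nilP -> _ _; exists [::].
case: s => [|t s'] Hs us aQ.
  by exists [::].
set s := t :: s' in Hs us aQ *.
set rest := seq.filter (predC (near t)) s.
have trest : t \notin rest by rewrite mem_filter /= nrefl.
have Hr : size rest <= m.
  have : size rest < size s.
    rewrite size_filter /s /= nrefl /= add0n ltnS; exact: count_size.
  move=> h; rewrite -ltnS; exact: leq_trans h Hs.
have aQr : all Q rest.
  by apply/allP => x; rewrite mem_filter => /andP[_ xs]; exact: (allP aQ).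
have [u' [uu' su' sep' sz']] := IH rest Hr (filter_uniq _ us) aQr.
exists (t :: u'); split.
- rewrite /= uu' andbT; apply/negP => /su'; by rewrite (negbTE trest).
- move=> x; rewrite inE => /orP[/eqP -> |]; first exact: mem_head.
  by move/su'; rewrite mem_filter => /andP[].
- move=> a b; rewrite !inE => /orP[/eqP -> | ha] /orP[/eqP -> | hb].
  + by rewrite eqxx.
  + by move=> _; have := su' _ hb; rewrite mem_filter => /andP[].
  + by move=> _; have := su' _ ha; rewrite mem_filter nsym => /andP[].
  + exact: sep'.
- have -> : size s = size (seq.filter (near t) s) + size rest.
    by rewrite !size_filter count_predC.
  rewrite mulnS; apply: leq_add => //.
  apply: (HK t); [exact: filter_uniq | | exact: filter_all].
  by apply/allP => x; rewrite mem_filter => /andP[_ xs]; exact: (allP aQ).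
Qed.

Local Open Scope ring_scope.

Section Haus.
Variables (R : realType) (n : nat).
Implicit Types (E X : set 'cV[R]_n).

Definition cost s X : \bar R :=
  (unit_ball_vol R s * (fine (ediam X) / 2) ^+ s)%:E.

Lemma ediam_ge0 E : (0 <= ediam E)%E.
Proof. by apply: ereal_sup_ubound; left. Qed.

Lemma ediam_le E x y : E x -> E y -> ((enorm (x - y))%:E <= ediam E)%E.
Proof. by move=> Ex Ey; apply: ereal_sup_ubound; right; exists x => //; exists y. Qed.

Lemma ediam0 : ediam (set0 : set 'cV[R]_n) = 0%E.
Proof.
apply/le_anti/andP; split; last exact: ediam_ge0.
by apply: ge_ereal_sup => z [->|[x []]].
Qed.

Lemma ubv_ge0 k : 0 <= unit_ball_vol R k.
Proof.
suff : 0 <= unit_ball_vol R k /\ 0 <= unit_ball_vol R k.+1 by case.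
elim: k => [|k [IH1 IH2]]; first by split => //=.
split => //=; case: k IH1 IH2 => [|k] IH1 IH2 /=.
  by rewrite mulr_ge0 // divr_ge0 // mulr_ge0 // pi_ge0.
by rewrite mulr_ge0 // divr_ge0 // mulr_ge0 // pi_ge0.
Qed.

Lemma cost_ge0 s X : (0 <= cost s X)%E.
Proof.
rewrite /cost lee_fin mulr_ge0 ?ubv_ge0 // exprn_ge0 // divr_ge0 //.
exact/fine_ge0/ediam_ge0.
Qed.

Lemma cost0 s : (0 < s)%N -> cost s set0 = 0%E.
Proof. by move=> s0; rewrite /cost ediam0 /= mul0r expr0n gtn_eqF // mulr0. Qed.

Lemma hd_ge0 s d X : (0 <= hausdorff_delta s d X)%E.
Proof.
apply: le_ereal_inf_tmp => _ [E _ <-].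
by apply: nneseries_ge0 => i _ _; exact: cost_ge0.
Qed.

Lemma hd_anti s d1 d2 X : d1 <= d2 ->
  (hausdorff_delta s d2 X <= hausdorff_delta s d1 X)%E.
Proof.
move=> d12; apply: ereal_inf_le_tmp => _ [E [c1 c2] <-]; exists E => //.
split => // i; apply: (le_trans (c2 i)); by rewrite lee_fin.
Qed.

Lemma hd_le_h s d X : 0 < d -> (hausdorff_delta s d X <= hausdorff s X)%E.
Proof. by move=> d0; apply: ereal_sup_ubound; exists d. Qed.

Lemma h_ge0 s X : (0 <= hausdorff s X)%E.
Proof. exact: le_trans (hd_ge0 s 1 X) (hd_le_h _ _ ltr01). Qed.

Lemma sep_superadd s (hs : (0 < s)%N) N (A : 'I_N -> set 'cV[R]_n) B eta d :
  (forall j, A j `<=` B) ->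
  (forall j k a b, j != k -> A j a -> A k b -> eta <= enorm (a - b)) ->
  0 <= d -> d < eta ->
  (\sum_(j < N) hausdorff_delta s d (A j) <= hausdorff_delta s d B)%E.
Proof.
move=> AB sep d0 deta; apply: le_ereal_inf_tmp => _ [E [cov diamE] <-].
pose Ej j i := if `[< exists a, A j a /\ E i a >] then E i else set0.
have step1 : forall j, (hausdorff_delta s d (A j) <=
    \sum_(0 <= i <oo) cost s (Ej j i))%E.
  move=> j; apply: ereal_inf_lbound; exists (Ej j) => //; split.
    move=> a Aa; have [i _ Eia] := cov a (AB j a Aa).
    by exists i => //; rewrite /Ej asboolT //; exists a.
  move=> i; rewrite /Ej; case: asboolP => _; first exact: diamE.
  by rewrite ediam0 lee_fin.
apply: (le_trans (lee_sum _ (fun j _ => step1 j))).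
rewrite -nneseries_sum; last by move=> j i _; exact: cost_ge0.
apply: lee_nneseries => [i _ _ | i _]; first by apply: sume_ge0 => j _; exact: cost_ge0.
case: (pselect (exists j, exists a, A j a /\ E i a)) => [[j0 h0] | hn].
  rewrite (bigD1 j0) //= big1 ?adde0; first by rewrite /Ej asboolT.
  move=> j jj0; rewrite /Ej asboolF ?cost0 //.
  move=> [a [Aa Ea]]; have [b [Ab Eb]] := h0.
  have h1 := sep j j0 a b jj0 Aa Ab.
  have h2 := le_trans (ediam_le Ea Eb) (diamE i); rewrite lee_fin in h2.
  by have := le_lt_trans h2 deta; rewrite ltNge h1.
rewrite big1; first exact: cost_ge0.
by move=> j _; rewrite /Ej asboolF ?cost0 // => h; apply: hn; exists j.
Qed.

Lemma superadd_H s (hs : (0 < s)%N) N (A : 'I_N -> set 'cV[R]_n) B eta c :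
  (forall j, A j `<=` B) ->
  (forall j k a b, j != k -> A j a -> A k b -> eta <= enorm (a - b)) ->
  0 < eta ->
  (forall j, (c%:E <= hausdorff s (A j))%E) ->
  ((N%:R * c)%:E <= hausdorff s B)%E.
Proof.
move=> AB sep eta0 Hc; apply/lee_addgt0Pr => e e0.
set eps := e / (N%:R + 1).
have eps0 : 0 < eps by rewrite divr_gt0 // ltr_wpDl.
have Hj : forall j, exists dj : R, 0 < dj /\
    ((c - eps)%:E < hausdorff_delta s dj (A j))%E.
  move=> j; have : ((c - eps)%:E < hausdorff s (A j))%E.
    by apply: lt_le_trans (Hc j); rewrite lte_fin ltrBlDr ltrDl.
  by move=> /ereal_sup_gt [_ [dj dj0 <-] h]; exists dj.
have [dj Hdj] := choice Hj.
set del := \big[Order.min/(eta / 2)]_(j < N) dj j.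
have del0 : 0 < del.
  apply/bigmin_gtP; split; first by rewrite divr_gt0.
  by move=> j _; case: (Hdj j).
have deleta : del < eta.
  apply: le_lt_trans (bigmin_le_id _ _ _ _) _; rewrite ltr_pdivrMr //; lra.
have step : ((N%:R * (c - eps))%:E <= hausdorff s B)%E.
  apply: le_trans (hd_le_h _ _ del0).
  apply: le_trans (sep_superadd hs AB sep (ltW del0) deleta).
  have -> : (N%:R * (c - eps))%:E = (\sum_(j < N) (c - eps)%:E)%E.
    by rewrite sumEFin sumr_const card_ord mulr_natl.
  apply: lee_sum => j _; apply: ltW; apply: lt_le_trans (proj2 (Hdj j)) _.
  by apply: hd_anti; apply: bigmin_le.
apply: le_trans (leeD2r _ step); rewrite -EFinD lee_fin.
have : N%:R * eps <= e.
  rewrite /eps mulrA ler_pdivrMr ?ltr_wpDl //; nra.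
lra.
Qed.

End Haus.

Definition yof (R : realType) n (r : R) (Om : set 'cV[R]_n) (a : 'cV[R]_n) : 'cV[R]_n :=
  match pselect (exists2 y, bdry Om y & eball 0 r (a - y)) with
  | left h => s2val (cid2 h) | right _ => a end.

Lemma yofP (R : realType) n (r : R) Om (a : 'cV[R]_n) :
  (exists2 y, bdry Om y & eball 0 r (a - y)) ->
  bdry Om (yof r Om a) /\ enorm (a - yof r Om a) < r.
Proof.
rewrite /yof => h; case: pselect => // h'; case: (cid2 h') => y /= b e.
by split => //; move: e; rewrite /eball /= subr0.
Qed.

Lemma sep_count (R : realType) n (hn : (0 < n.-1)%N) (r : R) (hr : 0 < r)
  (Om : set 'cV[R]_n) kappa H (HH : bdry_measure Om = H%:E)
  (ahl : max_ahlfors_regular Om kappa) rho (rho0 : 0 < rho) (rhor : rho <= r / 3)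
  (rhoq : (rho%:E < poweR (bdry_measure Om) (n.-1%:R)^-1)%E)
  (u : seq 'cV[R]_n) (uu : uniq u)
  (uS : forall a, a \in u -> exists2 y, bdry Om y & eball 0 r (a - y))
  (usep : forall a b, a \in u -> b \in u -> a != b -> 3 * r <= enorm (b - a)) :
  (size u)%:R * (kappa * rho ^+ n.-1) <= H.
Proof.
set N := size u.
pose pts (j : 'I_N) := nth 0 u j.
have ptsu j : pts j \in u by apply: mem_nth.
pose A (j : 'I_N) := bdry Om `&` eball (yof r Om (pts j)) rho.
have := @superadd_H R n n.-1 hn N A (bdry Om) (r / 3) (kappa * rho ^+ n.-1).
rewrite -/(bdry_measure Om) HH lee_fin; apply.
- by move=> j x [].
- move=> j k p q jk [_ Ap] [_ Aq]; rewrite /eball /= in Ap Aq.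
  have djk : pts j != pts k by rewrite nth_uniq.
  have h3 := usep _ _ (ptsu j) (ptsu k) djk.
  have [_ yj] := yofP (uS _ (ptsu j)); have [_ yk] := yofP (uS _ (ptsu k)).
  set yj' := yof r Om (pts j) in Ap yj; set yk' := yof r Om (pts k) in Aq yk.
  have t1 := enorm_tri (pts k) yk' (pts j).
  have t2 := enorm_tri yk' q (pts j).
  have t3 := enorm_tri q p (pts j).
  have t4 := enorm_tri p yj' (pts j).
  rewrite enormB in Aq.
  rewrite [enorm (yj' - pts j)]enormB in t4.
  rewrite [enorm (q - p)]enormB in t3.
  lra.
- by rewrite divr_gt0.
- by move=> j; apply: ahl => //; have [] := yofP (uS _ (ptsu j)).
Qed.

Lemma enorm0 (R : realType) n : enorm (0 : 'cV[R]_n) = 0.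
Proof. by rewrite /enorm big1 ?sqrtr0 // => i _; rewrite mxE expr0n. Qed.

Unset Implicit Arguments.

Theorem proposition2p4 (R : realType) (d : nat) (hd : (1 <= d)%N)
    (M : 'M[R]_(2 * d)) (hM : M \in unitmx) (r : R) (hr : 0 < r) :
  exists C D : R, forall (Om : set 'cV[R]_(2 * d)) (kappa : R),
    compact Om -> 0 < kappa ->
    (0 < bdry_measure Om)%E -> (bdry_measure Om < +oo)%E ->
    max_ahlfors_regular Om kappa ->
    (counting (bdry_lattice_pts M r Om)
      <= (C * (fine (bdry_measure Om) / kappa)
            * (1 + D / fine (bdry_measure Om)))%:E)%E.
Proof.
have hn : (0 < (2 * d).-1)%N by lia.
have [K HK] := lattice_ball_count hM (3 * r).
set m := (2 * d).-1 in hn *.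
set C0 : R := (3 / r) ^+ m.
set D0 : R := 2 ^+ m.
have C00 : 0 < C0 by rewrite exprn_gt0 // divr_gt0.
have D00 : 0 < D0 by rewrite exprn_gt0.
exists (K%:R * C0), (D0 / C0).
move=> Om kappa _ k0 H0 Hfin ahl.
have Hfn : bdry_measure Om \is a fin_num by rewrite ge0_fin_numE // ltW.
set H := fine (bdry_measure Om).
have HH : bdry_measure Om = H%:E by rewrite fineK.
have Hpos : 0 < H by move: H0; rewrite HH lte_fin.
have key : forall s, uniq s -> (forall x, x \in s -> bdry_lattice_pts M r Om x) ->
    (size s)%:R * kappa <= K%:R * (C0 * H + D0).
  move=> s us sS.
  have nrefl : forall t : 'cV[R]_(2 * d), enorm (t - t) < 3 * r.
    by move=> t; rewrite subrr enorm0 mulr_gt0.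
  have nsym : forall a b : 'cV[R]_(2 * d),
      (enorm (b - a) < 3 * r) = (enorm (a - b) < 3 * r).
    by move=> a b; rewrite enormB.
  have HK' : forall t (s' : seq 'cV[R]_(2 * d)), uniq s' ->
      all (fun x => `[< lattice M x >]) s' ->
      all (fun b => enorm (b - t) < 3 * r) s' -> (size s' <= K)%N.
    move=> t s' us' aQ an; apply: (HK t) => // x xs; split.
      by apply/asboolP; exact: (allP aQ).
    exact: (allP an).
  have aQ : all (fun x => `[< lattice M x >]) s.
    by apply/allP => x xs; apply/asboolP; case: (sS x xs).
  have [u [uu su sep sz]] := @greedy _ (fun x => `[< lattice M x >])
    (fun a b => enorm (b - a) < 3 * r) K nrefl nsym HK' s us aQ.
  have Hu : (size u)%:R * kappa <= C0 * H + D0.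
    have uS : forall a, a \in u -> exists2 y, bdry Om y & eball 0 r (a - y).
      by move=> a /su /sS [].
    have usep : forall a b, a \in u -> b \in u -> a != b -> 3 * r <= enorm (b - a).
      by move=> a b au bu ab; rewrite leNgt; exact: sep.
    set q := H `^ (m%:R^-1).
    have q0 : 0 < q by rewrite powR_gt0.
    have qm : q ^+ m = H.
      rewrite /q -powR_mulrn ?powR_ge0 // -powRrM mulVf ?powRr1 ?ltW //.
      by rewrite pnatr_eq0 -lt0n.
    have rhoq : forall rho, rho < q ->
        (rho%:E < poweR (bdry_measure Om) (m%:R^-1))%E.
      by move=> rho; rewrite HH poweR_EFin lte_fin.
    have N0 : 0 <= (size u)%:R :> R by [].
    case: (leP (r / 3) (q / 2)) => hq.
      have rq : r / 3 < q by lra.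
      have h := sep_count hn hr HH ahl (divr_gt0 hr (ltr0Sn _ 2)) (lexx _)
        (rhoq _ rq) uu uS usep.
      have e : C0 * (r / 3) ^+ m = 1.
        have e3 : 3 / r * (r / 3) = 1.
          by field; rewrite ?gt_eqF //; apply/andP; split; rewrite gt_eqF.
        by rewrite /C0 -exprMn e3 expr1n.
      have h2 : C0 * ((size u)%:R * (kappa * (r / 3) ^+ m)) <= C0 * H by rewrite ler_pM2l.
      have -> : (size u)%:R * kappa = C0 * ((size u)%:R * (kappa * (r / 3) ^+ m)).
        transitivity ((size u)%:R * kappa * (C0 * (r / 3) ^+ m)); first by rewrite e mulr1.
        by rewrite mulrCA -mulrA.
      lra.
    have q20 : 0 < q / 2 by lra.
    have q2q : q / 2 < q by lra.
    have h := sep_count hn hr HH ahl q20 (ltW hq) (rhoq _ q2q) uu uS usep.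
    rewrite expr_div_n qm in h.
    have h1 : (size u)%:R * (kappa * (H / D0)) * D0 <= H * D0 by rewrite ler_pM2r.
    have e : (size u)%:R * (kappa * (H / D0)) * D0 = (size u)%:R * kappa * H.
      by field; rewrite gt_eqF.
    rewrite e [H * D0]mulrC ler_pM2r // in h1.
    have : 0 <= C0 * H by rewrite mulr_ge0 // ltW.
    lra.
  apply: (@le_trans _ _ ((K * size u)%:R * kappa)).
    apply: ler_wpM2r; [exact: ltW | rewrite ler_nat //].
  by rewrite natrM -mulrA ler_wpM2l.
have eR : K%:R * C0 * (H / kappa) * (1 + D0 / C0 / H) = K%:R * (C0 * H + D0) / kappa.
  by field; rewrite !gt_eqF.
rewrite eR.
have key2 : forall s, uniq s -> (forall x, x \in s -> bdry_lattice_pts M r Om x) ->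
    (size s)%:R <= K%:R * (C0 * H + D0) / kappa.
  by move=> s us sS; rewrite ler_pdivlMr //; exact: key.
rewrite /counting; case: asboolP => fin.
  rewrite lee_fin; apply: key2; first exact: fset_uniq.
  by move=> x; rewrite in_fset_set // => /set_mem.
exfalso.
set b := Num.Def.archi_bound `|K%:R * (C0 * H + D0) / kappa|.
have [B BS Bb] := infinite_set_fset b fin.
have := key2 B (fset_uniq B) (fun x xB => BS x xB).
have := archi_boundP (normr_ge0 (K%:R * (C0 * H + D0) / kappa)).
rewrite -/b => hb hB.
have : (b%:R : R) <= (#|` B|)%:R by rewrite ler_nat.
have := ler_norm (K%:R * (C0 * H + D0) / kappa).
lra.
Qed.
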